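(* Assume condition (ii): $k(0)=\alpha\in(2,\infty)$. Then there exist $c>0$ and $h_0>0$ such that $\inf_{|u|\le h^{-1}}|\varphi(u)|\ge c\,h^{\alpha}$ for all $h\in(0,h_0]$.
   Context: $\nu$ is a finite Borel measure on $(0,\infty)$ with $\int_{(2,\infty)}\log x\,\nu(dx)<\infty$ (the Lévy measure of a compound Poisson subordinator), $k(x)=\nu((x,\infty))$ for $x\ge0$, and $\varphi(t)=\exp\big(\int_0^\infty(e^{itx}-1)\frac{k(x)}{x}dx\big)$ is the characteristic function of the stationary distribution of the OU process $dX_t=-\lambda X_tdt+dJ_{\lambda t}$ driven by the compound Poisson process $J$ with Lévy measure $\nu$. *)

(* Defs.v *)
From Stdlib Require Import Reals.
Open Scope R_scope.

Definition improper_int_from (a : R) (f : R -> R) (l : R) : Prop :=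
  (forall A, a <= A -> inhabited (Riemann_integrable f a A)) /\
  (forall eps, 0 < eps -> exists M, forall A (pr : Riemann_integrable f a A),
      M <= A -> Rabs (RiemannInt pr - l) < eps).

(* Complex numbers represented as pairs (re, im); modulus. *)
Definition cmod (z : R * R) : R := sqrt (fst z ^ 2 + snd z ^ 2).

Definition cexp (a b : R) : R * R := (exp a * cos b, exp a * sin b).

(* is_phi k t z :  z = φ(t) = exp( ∫_0^∞ (e^{itx}-1) k(x)/x dx ), where the
   complex integral is split into its real part  ∫ (cos(tx)-1) k(x)/x dx
   and imaginary part  ∫ sin(tx) k(x)/x dx. *)
Definition is_phi (k : R -> R) (t : R) (z : R * R) : Prop :=
  exists I1 I2,
    improper_int_from 0 (fun x => (cos (t * x) - 1) * k x / x) I1 /\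
    improper_int_from 0 (fun x => sin (t * x) * k x / x) I2 /\
    z = cexp I1 I2.

(* k is the tail function x |-> ν((x,∞)) of a finite Borel measure ν on (0,∞):
   nonnegative, nonincreasing, right-continuous on [0,∞), vanishing at ∞.
   (Every such function arises from a unique such ν.) *)
Definition tail_function (k : R -> R) : Prop :=
  (forall x, 0 <= x -> 0 <= k x) /\
  (forall x y, 0 <= x -> x <= y -> k y <= k x) /\
  (forall x, 0 <= x -> forall eps, 0 < eps ->
      exists d, 0 < d /\ forall y, x <= y < x + d -> Rabs (k y - k x) < eps) /\
  (forall eps, 0 < eps -> exists M, forall x, M <= x -> k x < eps).

(* Log-moment condition ∫_{(2,∞)} log x ν(dx) < ∞, expressed through k:
   by Fubini  ∫_{(2,∞)} log x ν(dx) = log 2 · k(2) + ∫_2^∞ k(x)/x dx,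
   so it is equivalent to convergence of ∫_2^∞ k(x)/x dx. *)
Definition log_moment_finite (k : R -> R) : Prop :=
  exists L, improper_int_from 2 (fun x => k x / x) L.

(* Main.v *)
Require Import Defs.
From Stdlib Require Import Reals.
Open Scope R_scope.
From Coquelicot Require Import Coquelicot.
From Stdlib Require Import Reals Lra Lia ZArith ClassicalEpsilon FunctionalExtensionality.
Open Scope R_scope.

Lemma sin_abs_le x : Rabs (sin x) <= Rabs x.
Proof.
  destruct (MVT_abs sin cos 0 x) as [c [Hc _]].
  { intros; apply derivable_pt_lim_sin. }
  rewrite sin_0, !Rminus_0_r in Hc. rewrite Hc.
  pose proof (COS_bound c).
  assert (Rabs (cos c) <= 1) by (apply Rabs_le; lra).
  pose proof (Rabs_pos x). nra.
Qed.

Lemma cos_abs_le x : Rabs (cos x - 1) <= Rabs x.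
Proof.
  destruct (MVT_abs cos (fun t => - sin t) 0 x) as [c [Hc _]].
  { intros; apply derivable_pt_lim_cos. }
  rewrite cos_0, Rminus_0_r in Hc. rewrite Hc.
  pose proof (SIN_bound c).
  assert (Rabs (- sin c) <= 1) by (rewrite Rabs_Ropp; apply Rabs_le; lra).
  pose proof (Rabs_pos x). nra.
Qed.

Lemma inv_small eps : 0 < eps -> exists N : nat, / INR (S N) < eps.
Proof.
  intros He. destruct (archimed (/ eps)) as [H1 _].
  assert (0 < / eps) by (apply Rinv_0_lt_compat; lra).
  assert (0 <= IZR (up (/eps))) by lra.
  exists (Z.to_nat (up (/ eps))).
  rewrite S_INR, INR_IZR_INZ, Z2Nat.id by (apply le_IZR; lra).
  set (m := IZR (up (/ eps))) in *.
  apply Rmult_lt_reg_l with (m + 1); [lra|].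
  rewrite Rinv_r by lra.
  apply Rmult_lt_reg_l with (/ eps); [lra|].
  replace (/ eps * ((m + 1) * eps)) with (m + 1) by (field; lra). lra.
Qed.

Lemma ex_RInt_unif (f : R -> R) (a b : R) :
  (forall eps, 0 < eps -> exists g, ex_RInt g a b /\
     forall x, Rmin a b <= x <= Rmax a b -> Rabs (f x - g x) <= eps) ->
  ex_RInt f a b.
Proof.
  intros H.
  assert (Hg : forall n : nat, {g : R -> R | ex_RInt g a b /\
     forall x, Rmin a b <= x <= Rmax a b -> Rabs (f x - g x) <= / INR (S n)}).
  { intro n; apply constructive_indefinite_description; apply H.
    apply Rinv_0_lt_compat, lt_0_INR; lia. }
  set (G n x := if Rle_dec (Rmin a b) x then if Rle_dec x (Rmax a b)
                then proj1_sig (Hg n) x else f x else f x).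
  destruct (filterlim_RInt G a b Hierarchy.eventually _ f (fun n => RInt (G n) a b))
    as [If [_ HI]].
  - intro n; apply RInt_correct.
    unfold G. destruct (Hg n) as [g Hgp]; simpl; destruct Hgp as [Hi _].
    apply ex_RInt_ext with g; [|exact Hi].
    intros x Hx.
    destruct (Rle_dec (Rmin a b) x); [|lra].
    destruct (Rle_dec x (Rmax a b)); [reflexivity|lra].
  - apply filterlim_locally. intros eps.
    destruct (inv_small eps (cond_pos eps)) as [N HN].
    exists N. intros n Hn t.
    change (Rabs (G n t - f t) < eps).
    unfold G. destruct (Hg n) as [g Hgp]; simpl; destruct Hgp as [_ Hb].
    destruct (Rle_dec (Rmin a b) t).
    + destruct (Rle_dec t (Rmax a b)).
      * rewrite Rabs_minus_sym. eapply Rle_lt_trans; [apply Hb; lra|].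
        eapply Rle_lt_trans; [|exact HN].
        apply Rinv_le_contravar; [apply lt_0_INR; lia|apply le_INR; lia].
      * rewrite Rminus_eq_0, Rabs_R0; apply cond_pos.
    + rewrite Rminus_eq_0, Rabs_R0; apply cond_pos.
  - exists If; exact HI.
Qed.
Lemma nat_above r : exists N : nat, r < INR N.
Proof.
  destruct (archimed r) as [H1 _].
  destruct (Rle_dec 0 (IZR (up r))).
  - exists (Z.to_nat (up r)). rewrite INR_IZR_INZ, Z2Nat.id by (apply le_IZR; lra). lra.
  - exists O. simpl. lra.
Qed.

Lemma ex_RInt_ind (P : R -> Prop) (G : R -> R) a b :
  a <= b -> (forall x y, a <= x -> x <= y -> y <= b -> P y -> P x) ->
  (forall t, a <= t <= b -> ex_RInt G a t) ->
  ex_RInt (fun x => if excluded_middle_informative (P x) then G x else 0) a b.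
Proof.
  intros Hab HP HG.
  set (E x := x = a \/ (a <= x <= b /\ P x)).
  destruct (completeness E) as [t [Hub Hlub]].
  { exists b. intros x [->|[Hx _]]; lra. }
  { exists a. left; reflexivity. }
  assert (Hat : a <= t) by (apply Hub; left; reflexivity).
  assert (Htb : t <= b) by (apply Hlub; intros x [->|[Hx _]]; lra).
  apply ex_RInt_Chasles with t.
  - apply ex_RInt_ext with G; [|apply HG; lra].
    intros x Hx. rewrite Rmin_left, Rmax_right in Hx by lra.
    destruct (excluded_middle_informative (P x)) as [Hp|Hp]; [reflexivity|].
    exfalso.
    assert (t <= x); [|lra].
    apply Hlub. intros y [->|[Hy Py]]; [lra|].
    destruct (Rle_dec y x) as [|Hyx]; [lra|].
    exfalso; apply Hp; apply HP with y; try lra; exact Py.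
  - apply ex_RInt_ext with (fun _ => 0); [|apply ex_RInt_const].
    intros x Hx. rewrite Rmin_left, Rmax_right in Hx by lra.
    destruct (excluded_middle_informative (P x)) as [Hp|Hp]; [|reflexivity].
    exfalso. assert (x <= t); [|lra]. apply Hub. right. split; [lra|exact Hp].
Qed.

Fixpoint Aapp (e v : R) (n : nat) : R :=
  match n with
  | O => 0
  | S m => Aapp e v m + (if Rle_dec (INR (S m) * e) v then e else 0)
  end.

Lemma Aapp_S e v n : Aapp e v (S n) = Aapp e v n + (if Rle_dec (INR (S n) * e) v then e else 0).
Proof. reflexivity. Qed.

Lemma Aapp_bound e v n : 0 < e -> 0 <= v ->
  (INR n * e <= v -> Aapp e v n = INR n * e) /\
  (v < INR n * e -> v - e < Aapp e v n <= v).
Proof.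
  intros He Hv. induction n as [|n [IH1 IH2]].
  - simpl. split; intros; lra.
  - rewrite Aapp_S. rewrite S_INR in *. split.
    + intros H. destruct (Rle_dec ((INR n + 1) * e) v); [|lra].
      rewrite IH1 by nra. ring.
    + intros H. destruct (Rle_dec ((INR n + 1) * e) v); [lra|].
      rewrite Rplus_0_r.
      destruct (Rle_dec (INR n * e) v).
      * rewrite IH1 by lra. nra.
      * apply IH2; lra.
Qed.

Lemma ex_RInt_mono_mult (k G : R -> R) a b M :
  0 <= a -> a <= b -> (forall x, 0 <= x -> 0 <= k x) ->
  (forall x y, 0 <= x -> x <= y -> k y <= k x) ->
  (forall t, a <= t <= b -> ex_RInt G a t) ->
  (forall x, a <= x <= b -> Rabs (G x) <= M) ->
  ex_RInt (fun x => G x * k x) a b.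
Proof.
  intros Ha Hab Hk0 Hkm HG HM.
  apply ex_RInt_unif. intros eps Heps.
  set (e := eps / (Rabs M + 1)).
  assert (He : 0 < e) by (unfold e; apply Rdiv_lt_0_compat; [lra|pose proof (Rabs_pos M); lra]).
  destruct (nat_above (k a / e)) as [N HN].
  exists (fun x => G x * Aapp e (k x) N). split.
  - clear HN. induction N as [|n IH].
    + apply ex_RInt_ext with (fun _ => 0); [|apply ex_RInt_const].
      intros; simpl; ring.
    + apply ex_RInt_ext with (fun x => @plus R_NormedModule (G x * Aapp e (k x) n)
         (if excluded_middle_informative (INR (S n) * e <= k x) then e * G x else 0)).
      * intros x _. rewrite Aapp_S. unfold plus; simpl.
        destruct (excluded_middle_informative _); destruct (Rle_dec _ _); try lra; ring.
      * apply (@ex_RInt_plus R_NormedModule); [exact IH|].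
        apply ex_RInt_ind; [exact Hab| |].
        { intros x y Hx Hxy Hy Hp. eapply Rle_trans; [exact Hp|apply Hkm; lra]. }
        { intros t Ht. apply (ex_RInt_scal G a t e). now apply HG. }
  - intros x Hx. rewrite Rmin_left, Rmax_right in Hx by lra.
    assert (Hkx : 0 <= k x) by (apply Hk0; lra).
    assert (Hkxa : k x <= k a) by (apply Hkm; lra).
    assert (Hlt : k x < INR N * e).
    { apply Rmult_lt_compat_r with (r := e) in HN; [|lra].
      unfold Rdiv in HN. rewrite Rmult_assoc, Rinv_l, Rmult_1_r in HN by lra. lra. }
    destruct (Aapp_bound e (k x) N He Hkx) as [_ Hb]. specialize (Hb Hlt).
    rewrite <- Rmult_minus_distr_l, Rabs_mult.
    assert (Rabs (k x - Aapp e (k x) N) <= e) by (apply Rabs_le; lra).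
    pose proof (HM x Hx). pose proof (Rabs_pos (G x)).
    pose proof (Rabs_pos (k x - Aapp e (k x) N)).
    assert (Rabs M * e <= eps).
    { unfold e. pose proof (Rabs_pos M).
      apply Rmult_le_reg_r with (Rabs M + 1); [lra|].
      unfold Rdiv. rewrite Rmult_assoc, (Rmult_assoc eps), Rinv_l by lra. nra. }
    assert (M <= Rabs M) by apply Rle_abs.
    nra.
Qed.
Definition Gq (F : R -> R) (l : R) (x : R) : R :=
  if Req_EM_T x 0 then l else F x / x.

Lemma Gq_cont (F : R -> R) l :
  (forall x, derivable_pt_lim F x (Derive F x)) -> derivable_pt_lim F 0 l -> F 0 = 0 ->
  forall x, continuous (Gq F l) x.
Proof.
  intros HF H0 HF0 x.
  destruct (Req_EM_T x 0) as [->|Hx].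
  - apply continuity_pt_filterlim.
    intros eps Heps. destruct (H0 eps Heps) as [d Hd].
    exists d. split; [apply cond_pos|].
    intros y [[_ Hy0] Hyd]. unfold Gq.
    destruct (Req_EM_T y 0) as [e|_]; [congruence|].
    destruct (Req_EM_T 0 0) as [_|n]; [|congruence].
    simpl in Hyd. unfold R_dist in *. rewrite Rminus_0_r in Hyd.
    specialize (Hd y (not_eq_sym Hy0) Hyd).
    rewrite Rplus_0_l, HF0, Rminus_0_r in Hd. exact Hd.
  - apply continuous_ext_loc with (fun y => F y / y).
    + exists (mkposreal (Rabs x) (Rabs_pos_lt x Hx)). intros y Hy.
      change (Rabs (y - x) < Rabs x) in Hy.
      unfold Gq. destruct (Req_EM_T y 0) as [->|]; [|reflexivity].
      exfalso. rewrite Rminus_0_l, Rabs_Ropp in Hy. lra.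
    + apply continuity_pt_filterlim.
      apply (continuity_pt_div F (fun y => y) x); [|apply continuity_pt_id|exact Hx].
      apply derivable_continuous_pt. exists (Derive F x). apply HF.
Qed.

Definition f1 (k : R -> R) (u : R) := fun x => (cos (u * x) - 1) * k x / x.
Definition f2 (k : R -> R) (u : R) := fun x => sin (u * x) * k x / x.
Definition G1 (u : R) := Gq (fun x => cos (u * x) - 1) 0.
Definition G2 (u : R) := Gq (fun x => sin (u * x)) u.

Lemma G1_cont u x : continuous (G1 u) x.
Proof.
  apply Gq_cont.
  - intros y. apply is_derive_Reals. apply Derive_correct. auto_derive. auto.
  - apply is_derive_Reals. auto_derive; auto. rewrite Rmult_0_r, sin_0. ring.
  - rewrite Rmult_0_r, cos_0. ring.
Qed.

Lemma G2_cont u x : continuous (G2 u) x.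
Proof.
  apply Gq_cont.
  - intros y. apply is_derive_Reals. apply Derive_correct. auto_derive. auto.
  - apply is_derive_Reals. auto_derive; auto. rewrite Rmult_0_r, cos_0. ring.
  - rewrite Rmult_0_r, sin_0. ring.
Qed.

Lemma G1_bound u x : Rabs (G1 u x) <= Rabs u.
Proof.
  unfold G1, Gq. destruct (Req_EM_T x 0) as [_|Hx].
  - rewrite Rabs_R0. apply Rabs_pos.
  - unfold Rdiv. rewrite Rabs_mult, Rabs_inv.
    apply Rmult_le_reg_r with (Rabs x); [now apply Rabs_pos_lt|].
    rewrite Rmult_assoc, Rinv_l by (apply Rabs_no_R0; exact Hx).
    rewrite Rmult_1_r, <- Rabs_mult. apply cos_abs_le.
Qed.

Lemma G2_bound u x : Rabs (G2 u x) <= Rabs u.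
Proof.
  unfold G2, Gq. destruct (Req_EM_T x 0) as [_|Hx].
  - lra.
  - unfold Rdiv. rewrite Rabs_mult, Rabs_inv.
    apply Rmult_le_reg_r with (Rabs x); [now apply Rabs_pos_lt|].
    rewrite Rmult_assoc, Rinv_l by (apply Rabs_no_R0; exact Hx).
    rewrite Rmult_1_r, <- Rabs_mult. apply sin_abs_le.
Qed.

Lemma div_swap (p q x : R) : p / x * q = p * q / x.
Proof. unfold Rdiv; ring. Qed.

Section Ints.
Variable k : R -> R.
Hypothesis Hk0 : forall x, 0 <= x -> 0 <= k x.
Hypothesis Hkm : forall x y, 0 <= x -> x <= y -> k y <= k x.

Lemma f1_int u a b : 0 <= a -> a <= b -> ex_RInt (f1 k u) a b.
Proof.
  intros Ha Hab.
  apply ex_RInt_ext with (fun x => G1 u x * k x).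
  - intros x Hx. rewrite Rmin_left in Hx by lra.
    unfold G1, Gq, f1. destruct (Req_EM_T x 0); [lra|]. apply div_swap.
  - apply ex_RInt_mono_mult with (Rabs u); auto.
    + intros t Ht. apply (@ex_RInt_continuous R_CompleteNormedModule). intros; apply G1_cont.
    + intros; apply G1_bound.
Qed.

Lemma f2_int u a b : 0 <= a -> a <= b -> ex_RInt (f2 k u) a b.
Proof.
  intros Ha Hab.
  apply ex_RInt_ext with (fun x => G2 u x * k x).
  - intros x Hx. rewrite Rmin_left in Hx by lra.
    unfold G2, Gq, f2. destruct (Req_EM_T x 0); [lra|]. apply div_swap.
  - apply ex_RInt_mono_mult with (Rabs u); auto.
    + intros t Ht. apply (@ex_RInt_continuous R_CompleteNormedModule). intros; apply G2_cont.
    + intros; apply G2_bound.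
Qed.
End Ints.
Lemma exR_Ch2 (f : R -> R) a b c : a <= b <= c -> ex_RInt f a c -> ex_RInt f b c.
Proof. exact (@ex_RInt_Chasles_2 R_CompleteNormedModule f a b c). Qed.
Lemma exR_Ch1 (f : R -> R) a b c : a <= b <= c -> ex_RInt f a c -> ex_RInt f a b.
Proof. exact (@ex_RInt_Chasles_1 R_CompleteNormedModule f a b c). Qed.

Definition RI (f : R -> R) (a b : R) : R := RInt f a b.

Lemma ex_RInt_Cm (g : R -> R) a b C : ex_RInt g a b -> ex_RInt (fun x => C * g x) a b.
Proof. intros H. exact (ex_RInt_scal g a b C H). Qed.

Lemma RI_Cm (g : R -> R) a b C : ex_RInt g a b -> RI (fun x => C * g x) a b = C * RI g a b.
Proof. intros H. exact (RInt_scal g a b C H). Qed.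

Lemma RI_split (f : R -> R) a b c : ex_RInt f a b -> ex_RInt f b c ->
  RI f a c = RI f a b + RI f b c.
Proof. intros H1 H2. unfold RI. rewrite <- (RInt_Chasles f a b c H1 H2). reflexivity. Qed.

Lemma RI_le (f g : R -> R) a b : a <= b -> ex_RInt f a b -> ex_RInt g a b ->
  (forall x, a < x < b -> f x <= g x) -> RI f a b <= RI g a b.
Proof. apply RInt_le. Qed.

Lemma RI_const a b c : RI (fun _ => c) a b = (b - a) * c.
Proof. unfold RI. rewrite RInt_const. reflexivity. Qed.

Lemma improper_rint (g : R -> R) a L : improper_int_from a g L ->
  (forall A, a <= A -> ex_RInt g a A) /\
  (forall eps, 0 < eps -> exists M, forall A, M <= A -> a <= A -> Rabs (RI g a A - L) < eps).
Proof.
  intros [H1 H2]. split.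
  - intros A HA. destruct (H1 A HA) as [pr]. now apply ex_RInt_Reals_1.
  - intros eps He. destruct (H2 eps He) as [M HM]. exists M. intros A HA HaA.
    destruct (H1 A HaA) as [pr]. unfold RI. rewrite (RInt_Reals g a A pr). now apply HM.
Qed.

Lemma improper_conv (f g : R -> R) (C L : R) :
  (forall A, 0 <= A -> ex_RInt f 0 A) ->
  (forall x, 2 <= x -> Rabs (f x) <= C * g x) ->
  improper_int_from 2 g L ->
  exists I, forall eps, 0 < eps -> exists M, forall A, M <= A -> Rabs (RI f 0 A - I) < eps.
Proof.
  intros Hf Hb Hg. destruct (improper_rint g 2 L Hg) as [Hgi Hgl].
  assert (Hc : forall eps, 0 < eps -> exists M, 2 <= M /\ forall A B, M <= A -> M <= B ->
            Rabs (RI f 0 B - RI f 0 A) < eps).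
  { intros eps He.
    assert (He' : 0 < eps / (2 * (Rabs C + 1))).
    { apply Rdiv_lt_0_compat; [lra|]. pose proof (Rabs_pos C); lra. }
    destruct (Hgl _ He') as [M HM].
    exists (Rmax M 2). split; [apply Rmax_r|].
    assert (key : forall A B, Rmax M 2 <= A -> A <= B -> Rabs (RI f 0 B - RI f 0 A) < eps).
    { intros A B HA HAB.
      pose proof (Rmax_l M 2). pose proof (Rmax_r M 2).
      assert (HfAB : ex_RInt f A B) by (apply exR_Ch2 with 0; [lra|apply Hf; lra]).
      rewrite (RI_split f 0 A B) by (try apply Hf; lra || exact HfAB).
      replace (RI f 0 A + RI f A B - RI f 0 A) with (RI f A B) by ring.
      assert (HgAB : ex_RInt g A B) by (apply exR_Ch2 with 2; [lra|apply Hgi; lra]).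
      assert (Hj : RI g A B = RI g 2 B - RI g 2 A).
      { rewrite (RI_split g 2 A B) by (try apply Hgi; lra || exact HgAB). ring. }
      assert (Hup : RI f A B <= C * RI g A B).
      { rewrite <- RI_Cm by exact HgAB. apply RI_le; auto.
        - now apply ex_RInt_Cm.
        - intros x Hx. specialize (Hb x ltac:(lra)). apply Rabs_le_between in Hb. lra. }
      assert (Hlo : (- C) * RI g A B <= RI f A B).
      { rewrite <- RI_Cm by exact HgAB. apply RI_le; auto.
        - now apply ex_RInt_Cm.
        - intros x Hx. specialize (Hb x ltac:(lra)). apply Rabs_le_between in Hb. lra. }
      assert (H1 : Rabs (RI g 2 A - L) < eps / (2 * (Rabs C + 1))) by (apply HM; lra).
      assert (H2 : Rabs (RI g 2 B - L) < eps / (2 * (Rabs C + 1))) by (apply HM; lra).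
      assert (Hjb : Rabs (RI g A B) < 2 * (eps / (2 * (Rabs C + 1)))).
      { rewrite Hj. apply Rabs_def2 in H1; apply Rabs_def2 in H2. apply Rabs_def1; lra. }
      assert (Hfb : Rabs (RI f A B) <= Rabs C * Rabs (RI g A B)).
      { rewrite <- Rabs_mult. apply Rabs_le.
        destruct (Rle_dec 0 C); destruct (Rle_dec 0 (RI g A B)).
        - rewrite Rabs_pos_eq by nra. nra.
        - rewrite Rabs_left1 by nra. nra.
        - rewrite Rabs_left1 by nra. nra.
        - rewrite Rabs_pos_eq by nra. nra. }
      assert (Rabs C * (2 * (eps / (2 * (Rabs C + 1)))) < eps).
      { replace (Rabs C * (2 * (eps / (2 * (Rabs C + 1))))) with (eps * (Rabs C / (Rabs C + 1)))
          by (field; pose proof (Rabs_pos C); lra).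
        assert (Rabs C / (Rabs C + 1) < 1).
        { pose proof (Rabs_pos C). apply Rmult_lt_reg_r with (Rabs C + 1); [lra|].
          unfold Rdiv. rewrite Rmult_assoc, Rinv_l by lra. lra. }
        nra. }
      pose proof (Rabs_pos C). pose proof (Rabs_pos (RI g A B)). nra. }
    intros A B HA HB. destruct (Rle_dec A B).
    - apply key; lra.
    - rewrite Rabs_minus_sym. apply key; lra. }
  set (s n := RI f 0 (INR n)).
  assert (Hcs : Cauchy_crit s).
  { intros eps He. destruct (Hc eps He) as [M [HM2 HM]].
    destruct (nat_above M) as [N HN]. exists N. intros n m Hn Hm.
    unfold R_dist, s. apply HM.
    - apply le_INR in Hm. lra.
    - apply le_INR in Hn. lra. }
  destruct (R_complete s Hcs) as [I HI].
  exists I. intros eps He.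
  destruct (Hc (eps / 2) ltac:(lra)) as [M [HM2 HM]].
  destruct (HI (eps / 2) ltac:(lra)) as [N1 HN1].
  destruct (nat_above M) as [N2 HN2].
  exists M. intros A HA.
  set (n := Nat.max N1 N2).
  assert (Hn1 : (n >= N1)%nat) by (unfold n; lia).
  assert (Hn2 : M <= INR n) by (assert (INR N2 <= INR n) by (apply le_INR; unfold n; lia); lra).
  specialize (HN1 n Hn1). unfold R_dist, s in HN1.
  specialize (HM A (INR n) HA Hn2).
  apply Rabs_def2 in HN1. apply Rabs_def2 in HM. apply Rabs_def1; lra.
Qed.
Definition H2 (U x : R) := sin (U * x) / (U * x) - ln x + / (U * x).
Definition dH2 (U x : R) := cos (U * x) / x - sin (U * x) / (U * x ^ 2) - / x - / (U * x ^ 2).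

Lemma H2_der U x : 0 < U -> 0 < x -> is_derive (H2 U) x (dH2 U x).
Proof.
  intros HU Hx. unfold H2, dH2. auto_derive.
  - repeat split; try apply Rgt_not_eq; try apply Rmult_lt_0_compat; auto.
  - field. split; apply Rgt_not_eq; auto.
Qed.

Lemma dH2_cont U x : 0 < U -> 0 < x -> continuous (dH2 U) x.
Proof.
  intros HU Hx. apply (@ex_derive_continuous R_AbsRing R_NormedModule). unfold dH2. auto_derive.
  repeat split; apply Rgt_not_eq; repeat apply Rmult_lt_0_compat; auto; lra.
Qed.

Lemma RI_dH2 U a b : 0 < U -> 0 < a -> a <= b ->
  ex_RInt (dH2 U) a b /\ RI (dH2 U) a b = H2 U b - H2 U a.
Proof.
  intros HU Ha Hab.
  assert (H : is_RInt (dH2 U) a b (minus (H2 U b) (H2 U a))).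
  { apply (@is_RInt_derive R_CompleteNormedModule).
    - intros x Hx. rewrite Rmin_left in Hx by lra. apply H2_der; lra.
    - intros x Hx. rewrite Rmin_left in Hx by lra. apply dH2_cont; lra. }
  split.
  - eexists; exact H.
  - unfold RI. rewrite (is_RInt_unique _ _ _ _ H). reflexivity.
Qed.

Lemma ln2_pos : 0 < ln 2.
Proof. pose proof ln_lt_2. lra. Qed.

Section Lower.
Variable k : R -> R.
Hypothesis Hk0 : forall x, 0 <= x -> 0 <= k x.
Hypothesis Hkm : forall x y, 0 <= x -> x <= y -> k y <= k x.
Variable alpha L M0 : R.
Hypothesis Halpha : 0 < alpha.
Hypothesis Hka : k 0 = alpha.
Hypothesis Hgi : forall A, 2 <= A -> ex_RInt (fun x => k x / x) 2 A.
Hypothesis Hgb : forall A, M0 <= A -> 2 <= A -> RI (fun x => k x / x) 2 A <= Rabs L + 1.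

Lemma k_le x : 0 <= x -> k x <= alpha.
Proof. intros; rewrite <- Hka; apply Hkm; lra. Qed.

Lemma f1_lo_near U x : 0 <= U -> 0 < x -> - (U * alpha) <= f1 k U x.
Proof.
  intros HU Hx.
  assert (E : f1 k U x = G1 U x * k x).
  { unfold G1, Gq, f1. destruct (Req_EM_T x 0); [lra|]. unfold Rdiv. ring. }
  rewrite E. pose proof (G1_bound U x). rewrite (Rabs_pos_eq U HU) in H.
  apply Rabs_le_between in H.
  pose proof (k_le x ltac:(lra)). pose proof (Hk0 x ltac:(lra)). nra.
Qed.

Lemma f1_lo_far U x : 0 < x -> - 2 * (k x / x) <= f1 k U x.
Proof.
  intros Hx. unfold f1. pose proof (COS_bound (U * x)).
  pose proof (Hk0 x ltac:(lra)).
  assert (0 <= k x / x) by (apply Rdiv_le_0_compat; lra).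
  replace ((cos (U * x) - 1) * k x / x) with ((cos (U * x) - 1) * (k x / x)) by (unfold Rdiv; ring).
  nra.
Qed.

Lemma tail_lo U A : M0 <= A -> 2 <= A -> - 2 * (Rabs L + 1) <= RI (f1 k U) 2 A.
Proof.
  intros HA1 HA2.
  apply Rle_trans with (RI (fun x => -2 * (k x / x)) 2 A).
  - rewrite RI_Cm by (apply Hgi; lra). pose proof (Hgb A HA1 HA2). lra.
  - apply RI_le; auto.
    + apply ex_RInt_Cm. apply Hgi; lra.
    + apply f1_int; auto; lra.
    + intros x Hx. apply f1_lo_far; lra.
Qed.

Lemma near_lo U a b : 0 <= U -> 0 <= a -> a <= b -> (b - a) * (- (U * alpha)) <= RI (f1 k U) a b.
Proof.
  intros HU Ha Hab. rewrite <- RI_const.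
  apply RI_le; auto.
  - apply ex_RInt_const.
  - apply f1_int; auto.
  - intros x Hx. apply f1_lo_near; lra.
Qed.

Lemma mid_lo U : 1 < U -> alpha * (H2 U 2 - H2 U (/ U)) <= RI (f1 k U) (/ U) 2.
Proof.
  intros HU.
  assert (HT : 0 < / U < 1) by (split; [apply Rinv_0_lt_compat; lra|rewrite <- Rinv_1; apply Rinv_lt_contravar; lra]).
  destruct (RI_dH2 U (/ U) 2 ltac:(lra) ltac:(lra) ltac:(lra)) as [Hex Heq].
  rewrite <- Heq, <- RI_Cm by exact Hex.
  apply RI_le; [lra|now apply ex_RInt_Cm|apply f1_int; auto; lra|].
  intros x Hx.
  assert (Hx0 : 0 < x) by lra.
  unfold f1, dH2.
  pose proof (k_le x ltac:(lra)). pose proof (Hk0 x ltac:(lra)).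
  pose proof (COS_bound (U * x)). pose proof (SIN_bound (U * x)).
  assert (A1 : (cos (U * x) - 1) * k x / x >= alpha * ((cos (U * x) - 1) / x)).
  { unfold Rdiv. apply Rle_ge.
    rewrite <- Rmult_assoc, (Rmult_comm alpha).
    apply Rmult_le_compat_r; [left; apply Rinv_0_lt_compat; lra|]. nra. }
  assert (A2 : (cos (U * x) - 1) / x - (cos (U * x) / x - sin (U * x) / (U * x ^ 2) - / x - / (U * x ^ 2))
               = (sin (U * x) + 1) / (U * x ^ 2)) by (field; lra).
  assert (A3 : 0 <= (sin (U * x) + 1) / (U * x ^ 2)).
  { apply Rdiv_le_0_compat; [lra|]. apply Rmult_lt_0_compat; [lra|apply pow_lt; lra]. }
  nra.
Qed.

Lemma H2_2 U : 1 < U -> - ln 2 <= H2 U 2.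
Proof.
  intros HU. unfold H2. pose proof (SIN_bound (U * 2)).
  assert (sin (U * 2) / (U * 2) + / (U * 2) >= 0).
  { replace (sin (U * 2) / (U * 2) + / (U * 2)) with ((sin (U * 2) + 1) / (U * 2)) by (field; lra).
    apply Rle_ge, Rdiv_le_0_compat; lra. }
  lra.
Qed.

Lemma H2_T U : 1 < U -> H2 U (/ U) <= 2 + ln U.
Proof.
  intros HU. unfold H2. rewrite Rinv_r by lra. rewrite ln_Rinv by lra.
  pose proof (SIN_bound 1). unfold Rdiv. rewrite Rinv_1. lra.
Qed.

Lemma lower U A : 0 <= U -> M0 <= A -> 2 <= A ->
  - (5 * alpha + alpha * ln 2 + 2 * Rabs L + 2) - alpha * ln (Rmax 1 U) <= RI (f1 k U) 0 A.
Proof.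
  intros HU HA1 HA2. pose proof ln2_pos. pose proof (Rabs_pos L).
  pose proof (tail_lo U A HA1 HA2).
  destruct (Rle_dec U 1) as [HU1|HU1].
  - rewrite Rmax_left by lra. rewrite ln_1.
    rewrite (RI_split _ 0 2 A) by (apply f1_int; auto; lra).
    pose proof (near_lo U 0 2 HU ltac:(lra) ltac:(lra)).
    assert (alpha * ln 2 >= 0) by (apply Rle_ge; apply Rmult_le_pos; lra).
    nra.
  - rewrite Rmax_right by lra.
    assert (HT : 0 < / U < 1) by (split; [apply Rinv_0_lt_compat; lra|rewrite <- Rinv_1; apply Rinv_lt_contravar; lra]).
    rewrite (RI_split _ 0 2 A) by (apply f1_int; auto; lra).
    rewrite (RI_split _ 0 (/ U) 2) by (apply f1_int; auto; lra).
    pose proof (near_lo U 0 (/ U) HU ltac:(lra) ltac:(lra)) as Hn.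
    replace ((/ U - 0) * - (U * alpha)) with (- alpha) in Hn by (field; lra).
    pose proof (mid_lo U ltac:(lra)). pose proof (H2_2 U ltac:(lra)). pose proof (H2_T U ltac:(lra)).
    assert (alpha * (H2 U 2 - H2 U (/ U)) >= alpha * (- ln 2 - 2 - ln U)).
    { apply Rle_ge, Rmult_le_compat_l; lra. }
    nra.
Qed.
End Lower.
Lemma to_improper (f : R -> R) I :
  (forall A, 0 <= A -> ex_RInt f 0 A) ->
  (forall eps, 0 < eps -> exists M, forall A, M <= A -> Rabs (RI f 0 A - I) < eps) ->
  improper_int_from 0 f I.
Proof.
  intros Hf Hl. split.
  - intros A HA. constructor. apply ex_RInt_Reals_0. now apply Hf.
  - intros eps He. destruct (Hl eps He) as [M HM]. exists M. intros A pr HA.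
    rewrite <- (RInt_Reals f 0 A pr). now apply HM.
Qed.

Lemma lim_ge (F : R -> R) I B :
  (forall eps, 0 < eps -> exists M, forall A, M <= A -> Rabs (F A - I) < eps) ->
  (exists M', forall A, M' <= A -> B <= F A) -> B <= I.
Proof.
  intros Hl [M' HM']. destruct (Rle_dec B I) as [|Hn]; [assumption|].
  destruct (Hl (B - I) ltac:(lra)) as [M HM].
  specialize (HM (Rmax M M') (Rmax_l _ _)). specialize (HM' (Rmax M M') (Rmax_r _ _)).
  apply Rabs_def2 in HM. lra.
Qed.

Theorem lemmaL2 (k : R -> R) (alpha : R)
  (hk : tail_function k) (hlog : log_moment_finite k)
  (halpha : 2 < alpha) (hk0 : k 0 = alpha) :
  exists c h0, 0 < c /\ 0 < h0 /\
    forall h, 0 < h <= h0 ->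
      forall u, Rabs u <= / h ->
        exists z, is_phi k u z /\ c * Rpower h alpha <= cmod z.
Proof.
  destruct hk as [Hk0 [Hkm _]]. destruct hlog as [L Hg].
  destruct (improper_rint _ 2 L Hg) as [Hgi Hgl].
  destruct (Hgl 1 Rlt_0_1) as [M0 HM0].
  assert (Hgb : forall A, M0 <= A -> 2 <= A -> RI (fun x => k x / x) 2 A <= Rabs L + 1).
  { intros A H1 H2. specialize (HM0 A H1 H2). apply Rabs_def2 in HM0.
    pose proof (Rle_abs L). lra. }
  set (C := 5 * alpha + alpha * ln 2 + 2 * Rabs L + 2).
  exists (exp (- C)), 1. split; [apply exp_pos|]. split; [lra|].
  intros h [Hh0 Hh1] u Hu.
  assert (Hkx : forall x, 2 <= x -> 0 <= k x / x).
  { intros x Hx. apply Rdiv_le_0_compat; [apply Hk0|]; lra. }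
  destruct (improper_conv (f1 k u) (fun x => k x / x) 2 L) as [I1 HI1]; auto.
  { intros A HA. apply f1_int; auto; lra. }
  { intros x Hx. unfold f1. pose proof (COS_bound (u * x)). pose proof (Hkx x Hx).
    replace ((cos (u * x) - 1) * k x / x) with ((cos (u * x) - 1) * (k x / x)) by (unfold Rdiv; ring).
    rewrite Rabs_mult, (Rabs_pos_eq (k x / x)) by assumption.
    apply Rmult_le_compat_r; [assumption|]. apply Rabs_le; lra. }
  destruct (improper_conv (f2 k u) (fun x => k x / x) 1 L) as [I2 HI2]; auto.
  { intros A HA. apply f2_int; auto; lra. }
  { intros x Hx. unfold f2. pose proof (SIN_bound (u * x)). pose proof (Hkx x Hx).
    replace (sin (u * x) * k x / x) with (sin (u * x) * (k x / x)) by (unfold Rdiv; ring).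
    rewrite Rabs_mult, (Rabs_pos_eq (k x / x)) by assumption.
    rewrite Rmult_1_l. rewrite <- (Rmult_1_l (k x / x)) at 2.
    apply Rmult_le_compat_r; [assumption|]. apply Rabs_le; lra. }
  exists (cexp I1 I2). split.
  { exists I1, I2. split; [|split; [|reflexivity]].
    - apply (to_improper (f1 k u)); auto. intros A HA. apply f1_int; auto; lra.
    - apply (to_improper (f2 k u)); auto. intros A HA. apply f2_int; auto; lra. }
  assert (Hf1 : f1 k u = f1 k (Rabs u)).
  { apply functional_extensionality. intros x. unfold f1.
    destruct (Rle_dec 0 u).
    - rewrite Rabs_pos_eq by lra. reflexivity.
    - rewrite Rabs_left by lra. rewrite Ropp_mult_distr_l_reverse, cos_neg. reflexivity. }
  assert (HLB : - C - alpha * ln (Rmax 1 (Rabs u)) <= I1).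
  { apply (lim_ge (fun A => RI (f1 k u) 0 A)); [exact HI1|].
    exists (Rmax M0 2). intros A HA. rewrite Hf1.
    apply lower with (M0 := M0); auto; try lra.
    - apply Rabs_pos.
    - eapply Rle_trans; [apply Rmax_l|exact HA].
    - eapply Rle_trans; [apply Rmax_r|exact HA]. }
  assert (Hcm : cmod (cexp I1 I2) = exp I1).
  { unfold cmod, cexp; cbn [fst snd].
    replace ((exp I1 * cos I2) ^ 2 + (exp I1 * sin I2) ^ 2) with ((exp I1) ^ 2 * ((sin I2)² + (cos I2)²))
      by (unfold Rsqr; ring).
    rewrite sin2_cos2, Rmult_1_r. apply sqrt_pow2. left; apply exp_pos. }
  rewrite Hcm. unfold Rpower. rewrite <- exp_plus.
  assert (Hmax : Rmax 1 (Rabs u) <= / h).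
  { apply Rmax_lub; [|exact Hu]. rewrite <- Rinv_1. apply Rinv_le_contravar; lra. }
  assert (Hln : ln (Rmax 1 (Rabs u)) <= - ln h).
  { rewrite <- ln_Rinv by lra. apply ln_le; [|exact Hmax].
    eapply Rlt_le_trans; [apply Rlt_0_1|apply Rmax_l]. }
  assert (Hfin : - C + alpha * ln h <= I1).
  { assert (alpha * ln (Rmax 1 (Rabs u)) <= alpha * (- ln h)) by (apply Rmult_le_compat_l; lra).
    lra. }
  destruct Hfin as [Hlt|Heq].
  - left. now apply exp_increasing.
  - right. now rewrite Heq.
Qed.
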